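(* Let $N$ be a finitely generated, semipositive binoid, $I$ an ideal of $N$ and $J$ an $N_+$-primary ideal of $N$. Then all pointed sets below are finite and $$\#\,N/J+\#\,(I\cap J)/(I+J)=\#\,I/(I+J)+\#\,(N/I)/(J+N/I).$$
   Context: A binoid $(N,+,0,\infty)$ is a commutative monoid $(N,+,0)$ with an element $\infty$ satisfying $a+\infty=\infty$ for all $a\in N$. Write $N^\times$ for the group of units of $N$ and $N_+=N\setminus N^\times$. $N$ is finitely generated if it is finitely generated as a monoid; semipositive if $N\neq\{\infty\}$ and $N^\times$ is finite. An ideal of $N$ is a nonempty subset $I\subseteq N$ with $I+N\subseteq I$ (so $\infty\in I$). An ideal $\mathfrak n$ is $N_+$-primary if $\mathfrak n\subseteq N_+$ and for every $a\in N_+$ there is $k\ge1$ with $ka\in\mathfrak n$. The residue class binoid $N/I$ is $(N\setminus I)\cup\{\infty\}$. An $N$-set is a pointed set $(S,p)$ with a map $N\times S\to S$, $(n,s)\mapsto n+s$, such that $(n+m)+s=n+(m+s)$, $0+s=s$, $\infty+s=p$ and $n+p=p$. $N$, its ideals and $N/I$ are $N$-sets with distinguished point $\infty$. For an ideal $J$ and an $N$-set $T$, $J+T=\{a+t:a\in J,t\in T\}$ is an $N$-subset; for an $N$-subset $S\subseteq T$ (a subset containing $p$ and stable under the action), the quotient $T/S$ is the $N$-set $(T\setminus S)\cup\{p\}$ (with $S$ collapsed to the point). In particular $I+J=\{a+b:a\in I,b\in J\}\subseteq I\cap J$. For a finite pointed set $S$ we write $\#S=|S|-1$. *)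

(* Defs.v *)
From Stdlib Require Import List Arith Classical ClassicalEpsilon.
Import ListNotations.

Record binoid := Binoid {
  bcar :> Type;
  badd : bcar -> bcar -> bcar;
  bzero : bcar;
  binf : bcar;
  baddA : forall a b c, badd a (badd b c) = badd (badd a b) c;
  baddC : forall a b, badd a b = badd b a;
  badd0 : forall a, badd bzero a = a;
  baddinf : forall a, badd a binf = binf
}.

Arguments badd {b} _ _ : rename.
Arguments bzero {b} : rename.
Arguments binf {b} : rename.

Section Binoid.
Variable N : binoid.

Fixpoint bmul (k : nat) (a : N) : N :=
  match k with 0 => bzero | S k' => badd a (bmul k' a) end.

Inductive generated (G : N -> Prop) : N -> Prop :=
| gen_zero : generated G bzero
| gen_gen : forall g, G g -> generated G g
| gen_add : forall a b, generated G a -> generated G b -> generated G (badd a b).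

Definition fin_generated : Prop :=
  exists l : list N, forall x : N, generated (fun g => In g l) x.

Definition is_unit (a : N) : Prop := exists b, badd a b = bzero.

Definition finite_set {T : Type} (P : T -> Prop) : Prop :=
  exists l : list T, forall x, P x -> In x l.

Definition semipositive : Prop :=
  (exists x : N, x <> binf) /\ finite_set is_unit.

Definition ideal (I : N -> Prop) : Prop :=
  (exists x, I x) /\ forall a n, I a -> I (badd a n).

Definition primary_ideal (J : N -> Prop) : Prop :=
  ideal J /\ (forall a, J a -> ~ is_unit a) /\
  forall a, ~ is_unit a -> exists k, 1 <= k /\ J (bmul k a).

Definition sumset (I J : N -> Prop) : N -> Prop :=
  fun x => exists a b, I a /\ J b /\ x = badd a b.

(* The residue class binoid N/I = (N \ I) u {oo}, realised as a subset of N,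
   with its N-set action n + t = n + t if n + t is not in I, and oo otherwise. *)
Definition residue (I : N -> Prop) : N -> Prop :=
  fun x => ~ I x \/ x = binf.

Definition residue_act (I : N -> Prop) (n t : N) : N :=
  if excluded_middle_informative (I (badd n t)) then binf else badd n t.

Definition sum_residue (J I : N -> Prop) : N -> Prop :=
  fun x => exists a t, J a /\ residue I t /\ x = residue_act I a t.

End Binoid.

Definition has_card {T : Type} (P : T -> Prop) (n : nat) : Prop :=
  exists l : list T, NoDup l /\ (forall x, P x <-> In x l) /\ length l = n.

(* For a pointed set A (containing the distinguished point) and an N-subset
   S of A (also containing the point), the quotient A/S = (A \ S) u {p};
   hence #(A/S) = |A/S| - 1 is the number of elements of A not in S. *)
Definition quot_card {T : Type} (A S : T -> Prop) (n : nat) : Prop :=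
  has_card (fun x => A x /\ ~ S x) n.

(* Main.v *)
Require Import Defs.
From Stdlib Require Import List Arith Classical ClassicalEpsilon.
From Stdlib Require Import Lia.
Import ListNotations.

Lemma badd0r (N : binoid) (a : N) : badd a bzero = a.
Proof. rewrite baddC. apply badd0. Qed.

Lemma bmul_add (N : binoid) a b (x : N) : bmul N (a + b) x = badd (bmul N a x) (bmul N b x).
Proof. induction a as [|a IH]; simpl. - now rewrite badd0. - rewrite IH, baddA. reflexivity. Qed.

Lemma swap4 (N : binoid) (a b c d : N) :
  badd (badd a b) (badd c d) = badd (badd a c) (badd b d).
Proof. rewrite <- !baddA. f_equal. rewrite !baddA. f_equal. apply baddC. Qed.

Fixpoint phi (N : binoid) (l : list N) (f : nat -> nat) : N :=
  match l with
  | [] => bzero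
  | g :: l' => badd (bmul N (f 0) g) (phi N l' (fun i => f (S i)))
  end.

Lemma phi_add (N : binoid) (l : list N) : forall f g,
  phi N l (fun i => f i + g i) = badd (phi N l f) (phi N l g).
Proof. induction l as [|x l IH]; intros f g; simpl.
- now rewrite badd0.
- rewrite bmul_add, (IH (fun i => f (S i)) (fun i => g (S i))). apply swap4. Qed.

Lemma phi_ext (N : binoid) (l : list N) : forall f g,
  (forall i, i < length l -> f i = g i) -> phi N l f = phi N l g.
Proof. induction l as [|x l IH]; intros f g H; simpl; auto.
 rewrite (H 0) by (simpl; lia). f_equal. apply IH. intros i Hi. apply H. simpl; lia. Qed.

Lemma phi_zero (N : binoid) (l : list N) : phi N l (fun _ => 0) = bzero.
Proof. induction l as [|x l IH]; simpl; auto. rewrite IH, badd0. reflexivity. Qed.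

Lemma phi_split (N : binoid) (l : list N) f g : (forall i, i < length l -> f i <= g i) ->
  phi N l g = badd (phi N l f) (phi N l (fun i => g i - f i)).
Proof. intros H. rewrite <- phi_add. apply phi_ext. intros i Hi. specialize (H i Hi). lia. Qed.

Lemma phi_gen (N : binoid) (l : list N) g : In g l -> exists f, g = phi N l f.
Proof. induction l as [|a l IH]; simpl; intros H; [contradiction|].
destruct H as [<-|H].
- exists (fun i => match i with 0 => 1 | S _ => 0 end). simpl. rewrite phi_zero, !badd0r. reflexivity.
- destruct (IH H) as [f Hf]. exists (fun i => match i with 0 => 0 | S j => f j end).
  simpl. rewrite badd0. exact Hf.
Qed.

Lemma phi_rep (N : binoid) (l : list N) x : generated N (fun g => In g l) x -> exists f, x = phi N l f.
Proof. induction 1.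
- exists (fun _ => 0). symmetry. apply phi_zero.
- apply phi_gen; auto.
- destruct IHgenerated1 as [f1 ->], IHgenerated2 as [f2 ->].
  exists (fun i => f1 i + f2 i). symmetry. apply phi_add.
Qed.

Lemma unit_add (N : binoid) (a b : N) : is_unit N a -> is_unit N b -> is_unit N (badd a b).
Proof. intros [a' Ha] [b' Hb]. exists (badd a' b'). rewrite swap4, Ha, Hb, badd0. reflexivity. Qed.

Lemma unit_zero (N : binoid) : is_unit N bzero.
Proof. exists bzero. apply badd0. Qed.

Lemma unit_bmul (N : binoid) k (a : N) : is_unit N a -> is_unit N (bmul N k a).
Proof. intros H. induction k; simpl. apply unit_zero. apply unit_add; auto. Qed.

Lemma phi_unit (N : binoid) (l : list N) : forall f,
  (forall i, i < length l -> ~ is_unit N (nth i l bzero) -> f i = 0) -> is_unit N (phi N l f).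
Proof. induction l as [|a l IH]; intros f H; simpl. apply unit_zero.
  apply unit_add.
  - destruct (classic (is_unit N a)) as [Ha|Ha]. apply unit_bmul; auto.
    rewrite (H 0); simpl; auto; try lia. apply unit_zero.
  - apply IH. intros i Hi Hn. apply (H (S i)); simpl; auto. lia.
Qed.

Lemma phi_J (N : binoid) (J : N -> Prop) : ideal N J -> forall (l : list N) f i k,
  i < length l -> J (bmul N k (nth i l bzero)) -> k <= f i -> J (phi N l f).
Proof. intros [_ Hid] l. induction l as [|a l IH]; intros f i k Hi Hk Hle; simpl in *; [lia|].
  destruct i as [|i].
  - replace (f 0) with (k + (f 0 - k)) by lia. rewrite bmul_add. apply Hid. apply Hid. auto.
  - rewrite baddC. apply Hid. apply (IH (fun i => f (S i)) i k); auto. lia.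
Qed.

Lemma bound_lemma (N : binoid) (J : N -> Prop) : primary_ideal N J -> forall l : list N,
  exists M, forall g, In g l -> ~ is_unit N g -> exists k, k <= M /\ J (bmul N k g).
Proof. intros [_ [_ Hk]] l. induction l as [|a l [M HM]].
  - exists 0. intros g [].
  - destruct (classic (is_unit N a)) as [Ha|Ha].
    + exists M. intros g [<-|Hg] Hn; [contradiction|auto].
    + destruct (Hk a Ha) as [k [_ Hka]]. exists (k + M).
      intros g [<-|Hg] Hn.
      * exists k. split; auto; lia.
      * destruct (HM g Hg Hn) as [k' [? ?]]. exists k'. split; auto; lia.
Qed.

Fixpoint boxes (r M : nat) : list (nat -> nat) :=
  match r with
  | 0 => [fun _ => 0]
  | S r' => flat_map (fun h => map (fun v => fun i => match i with 0 => v | S i' => h i' end)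
                                   (seq 0 M)) (boxes r' M)
  end.

Lemma boxes_cover M : forall r h, (forall i, i < r -> h i < M) ->
  exists h', In h' (boxes r M) /\ forall i, i < r -> h' i = h i.
Proof. induction r as [|r IH]; intros h H; simpl.
  - exists (fun _ => 0). split; [left; auto|intros; lia].
  - destruct (IH (fun i => h (S i))) as [h' [Hin Heq]].
    { intros i Hi. apply H. lia. }
    exists (fun i => match i with 0 => h 0 | S i' => h' i' end). split.
    + apply in_flat_map. exists h'. split; auto. apply in_map_iff. exists (h 0).
      split; auto. apply in_seq. specialize (H 0). lia.
    + intros [|i] Hi; auto. apply Heq. lia.
Qed.

Lemma finJ (N : binoid) (J : N -> Prop) : fin_generated N -> semipositive N -> primary_ideal N J ->
  exists L, forall x, ~ J x -> In x L.
Proof.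
  intros [l Hl] [_ [LU HLU]] HJ.
  destruct (bound_lemma N J HJ l) as [M HM].
  pose proof HJ as [[_ Hid] _].
  exists (flat_map (fun u => map (fun h => badd u (phi N l h)) (boxes (length l) (S M))) LU).
  intros x Hx. destruct (phi_rep N l x (Hl x)) as [f ->].
  set (uf := fun i => if excluded_middle_informative (is_unit N (nth i l bzero)) then f i else 0).
  set (nf := fun i => if excluded_middle_informative (is_unit N (nth i l bzero)) then 0 else f i).
  assert (Heq : phi N l f = badd (phi N l uf) (phi N l nf)).
  { rewrite <- phi_add. apply phi_ext. intros i _. unfold uf, nf.
    destruct (excluded_middle_informative _); lia. }
  assert (Hu : is_unit N (phi N l uf)).
  { apply phi_unit. intros i Hi Hn. unfold uf.
    destruct (excluded_middle_informative _); [contradiction|reflexivity]. }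
  assert (Hb : forall i, i < length l -> nf i < S M).
  { intros i Hi. destruct (classic (is_unit N (nth i l bzero))) as [Hn|Hn].
    - unfold nf. destruct (excluded_middle_informative _); [lia|contradiction].
    - assert (Hnfi : nf i = f i).
      { unfold nf. destruct (excluded_middle_informative _); [contradiction|reflexivity]. }
      destruct (HM (nth i l bzero) (nth_In _ _ Hi) Hn) as [k [Hk HJk]].
      destruct (le_lt_dec k (nf i)) as [Hle|Hlt]; [|lia].
      exfalso. apply Hx. rewrite Heq, baddC. apply Hid.
      apply (phi_J N J (proj1 HJ) l nf i k Hi HJk Hle). }
  destruct (boxes_cover (S M) (length l) nf Hb) as [h' [Hin Hh']].
  apply in_flat_map. exists (phi N l uf). split; [apply HLU; auto|].
  apply in_map_iff. exists h'. split; auto.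
  rewrite Heq. f_equal. apply phi_ext. auto.
Qed.

Definition le_on (D : list nat) (f g : nat -> nat) := forall i, In i D -> f i <= g i.
Definition fbasis (D : list nat) (U S : (nat -> nat) -> Prop) :=
  exists B, (forall b, In b B -> U b) /\ forall f, S f -> exists b, In b B /\ le_on D b f.

Lemma fbasis_or D U S1 S2 (S : (nat -> nat) -> Prop) :
  fbasis D U S1 -> fbasis D U S2 -> (forall f, S f -> S1 f \/ S2 f) -> fbasis D U S.
Proof. intros [B1 [H1 C1]] [B2 [H2 C2]] H. exists (B1 ++ B2). split.
- intros b Hb. apply in_app_or in Hb. destruct Hb; auto.
- intros f Hf. destruct (H f Hf) as [Hf'|Hf'].
  + destruct (C1 f Hf') as [b [? ?]]. exists b. split; auto. apply in_or_app; auto.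
  + destruct (C2 f Hf') as [b [? ?]]. exists b. split; auto. apply in_or_app; auto.
Qed.

Lemma fbasis_empty D U (S : (nat -> nat) -> Prop) : (forall f, ~ S f) -> fbasis D U S.
Proof. intros H. exists []. split; [intros b []|intros f Hf; exfalso; eapply H; eauto]. Qed.

Lemma fbasis_list {X} D U (L : list X) (S : X -> (nat -> nat) -> Prop) :
  (forall x, In x L -> fbasis D U (S x)) -> fbasis D U (fun f => exists x, In x L /\ S x f).
Proof. induction L as [|x L IH]; intros H.
- apply fbasis_empty. intros f [x [[] _]].
- apply fbasis_or with (S x) (fun f => exists y, In y L /\ S y f).
  + apply H; left; auto.
  + apply IH; intros y Hy; apply H; right; auto.
  + intros f [y [[<-|Hy] Hs]]; [left; auto| right; eauto].
Qed.

Definition upd (f : nat -> nat) i v := fun j => if Nat.eqb j i then v else f j.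

Lemma dickson : forall n (D : list nat) (U : (nat -> nat) -> Prop), length D <= n ->
  (forall f g, U f -> le_on D f g -> U g) -> fbasis D U U.
Proof.
  induction n as [|n IH]; intros D U HD HU.
  - destruct D; [|simpl in HD; lia].
    destruct (classic (exists a, U a)) as [[a Ha]|Hn].
    + exists [a]. split; [intros b [<-|[]]; auto|]. intros f _. exists a. split; [left; auto|intros i []].
    + apply fbasis_empty. intros f Hf; apply Hn; eauto.
  - destruct (classic (exists a, U a)) as [[a Ha]|Hn].
    2:{ apply fbasis_empty. intros f Hf; apply Hn; eauto. }
    pose (Sv := fun i f => exists v, In v (seq 0 (a i)) /\ (U f /\ f i = v)).
    apply fbasis_or with (fun f => le_on D a f) (fun f => exists i, In i D /\ Sv i f).
    + exists [a]. split; [intros b [<-|[]]; auto|]. intros f Hf. exists a. split; [left; auto|auto].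
    + apply (fbasis_list D U D Sv). intros i Hi.
      apply (fbasis_list D U (seq 0 (a i)) (fun v f => U f /\ f i = v)). intros v Hv.
      destruct (IH (remove Nat.eq_dec i D) (fun f => U (upd f i v))) as [B [HB CB]].
      * pose proof (remove_length_lt Nat.eq_dec D i Hi). lia.
      * intros f g Hf Hle. apply (HU _ _ Hf). intros j Hj. unfold upd.
        destruct (Nat.eqb_spec j i); [lia|]. apply Hle. apply in_in_remove; auto.
      * exists (map (fun b => upd b i v) B). split.
        -- intros b Hb. apply in_map_iff in Hb. destruct Hb as [b' [<- Hb']]. apply HB; auto.
        -- intros f [Hf Hfi]. destruct (CB f) as [b [Hb Hbf]].
           ++ apply (HU _ _ Hf). intros j Hj. unfold upd. destruct (Nat.eqb_spec j i); subst; lia.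
           ++ exists (upd b i v). split; [apply in_map_iff; exists b; split; auto|]. intros j Hj. unfold upd.
              destruct (Nat.eqb_spec j i); [subst; lia|]. apply Hbf. apply in_in_remove; auto.
    + intros f Hf. destruct (classic (le_on D a f)) as [H|H]; [left; auto|right].
      apply not_all_ex_not in H. destruct H as [i Hi]. apply imply_to_and in Hi.
      destruct Hi as [HiD Hlt].
      exists i. split; auto. exists (f i). split; [apply in_seq; lia|auto].
Qed.

Lemma fin_card {T} (P : T -> Prop) (L : list T) : (forall x, P x -> In x L) -> exists n, has_card P n.
Proof.
  intros H.
  pose (dec := fun x y : T => excluded_middle_informative (x = y)).
  pose (l' := nodup dec (filter (fun x => if excluded_middle_informative (P x) then true else false) L)).
  exists (length l'), l'. split; [apply NoDup_nodup|split; [|reflexivity]].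
  intros x. unfold l'. rewrite nodup_In, filter_In.
  destruct (excluded_middle_informative (P x)) as [Hp|Hp]; split; intros Hx.
  - split; auto.
  - auto.
  - contradiction.
  - destruct Hx as [_ Hx]; discriminate.
Qed.

Lemma has_card_ext {T} (P Q : T -> Prop) n : (forall x, P x <-> Q x) -> has_card P n -> has_card Q n.
Proof. intros H [l [Hl [Hi Hn]]]. exists l. split; auto. split; auto. intros x. rewrite <- H. auto. Qed.

Lemma has_card_union {T} (P Q R : T -> Prop) a b : has_card P a -> has_card Q b ->
  (forall x, P x -> ~ Q x) -> (forall x, R x <-> P x \/ Q x) -> has_card R (a + b).
Proof.
  intros [l1 [N1 [H1 L1]]] [l2 [N2 [H2 L2]]] Hd HR.
  exists (l1 ++ l2). split; [|split].
  - apply NoDup_app; auto. intros x Hx1 Hx2. apply (Hd x); [apply H1|apply H2]; auto.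
  - intros x. rewrite HR, in_app_iff, H1, H2. tauto.
  - rewrite length_app; lia.
Qed.

Theorem mainTheorem15 (N : binoid) (I J : N -> Prop) :
  fin_generated N -> semipositive N ->
  ideal N I -> primary_ideal N J ->
  exists n1 n2 n3 n4 : nat,
    (* # N/J *)
    quot_card (fun _ : N => True) J n1 /\
    (* # (I cap J)/(I + J) *)
    quot_card (fun x => I x /\ J x) (sumset N I J) n2 /\
    (* # I/(I + J) *)
    quot_card I (sumset N I J) n3 /\
    (* # (N/I)/(J + N/I) *)
    quot_card (residue N I) (sum_residue N J I) n4 /\
    n1 + n2 = n3 + n4.
Proof.
  intros Hfg Hsp HI HJ.
  destruct (finJ N J Hfg Hsp HJ) as [LJ HLJ].
  pose proof HJ as [[[j0 Hj0] HJid] [HJnu _]].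
  pose proof HI as [[i0 Hi0] HIid].
  destruct Hfg as [l Hl].
  destruct (dickson (length (seq 0 (length l))) (seq 0 (length l))
              (fun f => I (phi N l f)) (Nat.le_refl _)) as [B [HB CB]].
  { intros f g Hf Hle. rewrite (phi_split N l f g). apply HIid; auto.
    intros i Hi. apply Hle. apply in_seq. lia. }
  assert (HJabs : forall a b, J b -> J (badd a b)).
  { intros a b Hb. rewrite baddC. apply HJid; auto. }
  destruct (fin_card (fun x => I x /\ ~ J x) LJ) as [p Hp]. { intros x [_ H]; auto. }
  destruct (fin_card (fun x => ~ I x /\ ~ J x) LJ) as [q Hq]. { intros x [_ H]; auto. }
  destruct (fin_card (fun x => (I x /\ J x) /\ ~ sumset N I J x)
     (flat_map (fun b => map (fun n => badd (phi N l b) n) LJ) B)) as [rr Hr].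
  { intros x [[HIx _] Hs]. destruct (phi_rep N l x (Hl x)) as [f ->].
    destruct (CB f HIx) as [b [Hb Hbf]].
    assert (Hsp' : phi N l f = badd (phi N l b) (phi N l (fun i => f i - b i))).
    { apply phi_split. intros i Hi. apply Hbf. apply in_seq. lia. }
    apply in_flat_map. exists b. split; auto. apply in_map_iff.
    exists (phi N l (fun i => f i - b i)). split; auto.
    apply HLJ. intros HJ'. apply Hs. exists (phi N l b), (phi N l (fun i => f i - b i)).
    split; [apply HB; auto|split; auto]. }
  assert (HIinf : I binf). { rewrite <- (baddinf N i0). apply HIid; auto. }
  exists (p + q), rr, (rr + p), q. split; [|split; [|split; [|split]]].
  - unfold quot_card. apply (has_card_union _ _ _ p q Hp Hq).
    + intros x [? _] [? _]; contradiction.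
    + intros x. destruct (classic (I x)); tauto.
  - exact Hr.
  - unfold quot_card. apply (has_card_union _ _ _ rr p Hr Hp).
    + intros x [[_ ?] _] [_ ?]; contradiction.
    + intros x. split.
      * intros [HIx Hs]. destruct (classic (J x)); [left|right]; tauto.
      * intros [[[HIx _] Hs]|[HIx HnJ]]; split; auto.
        intros [a [b [_ [Hb ->]]]]. apply HnJ. apply HJabs; auto.
  - unfold quot_card. apply (has_card_ext (fun x => ~ I x /\ ~ J x)); [|exact Hq]. intros x. split.
    + intros [HnI HnJ]. split; [left; auto|].
      intros [a [t [Ha [_ Hx]]]]. unfold residue_act in Hx.
      destruct (excluded_middle_informative _) as [Hin|Hin].
      * apply HnI. rewrite Hx. auto.
      * apply HnJ. rewrite Hx. apply HJid; auto.
    + intros [Hres Hns]. destruct Hres as [HnI|Hinf].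
      * split; auto. intros HJx. apply Hns. exists x, bzero. split; auto. split.
        -- left. intros HI0. apply HnI. rewrite <- (badd0 N x). apply HIid; auto.
        -- unfold residue_act. rewrite badd0r.
           destruct (excluded_middle_informative _); [contradiction|reflexivity].
      * exfalso. apply Hns. exists j0, binf. split; auto. split; [right; auto|].
        unfold residue_act. rewrite baddinf.
        destruct (excluded_middle_informative _); [subst; reflexivity|contradiction].
  - lia.
Qed.
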